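(* Fix $\gamma \in (\tfrac{2}{3},2)$ and let $x \in B_1^+(\mathrm{VI}_0) \setminus S_1^+(\mathrm{VI}_0)$. Then the solution through $x$ satisfies $$\lim_{\tau \to -\infty} \big(N_-^2 - N_+^2\big)(\tau) = 0.$$ In particular, $\alpha(x) \subset B(\mathrm{I}) \cup B_2^+(\mathrm{II}) \cup B_3^-(\mathrm{II})$.
   Context: Set $q^* := \tfrac{3\gamma-2}{2} \in (0,2)$. On $\mathbb{R}^5$ with coordinates $(\Sigma_+,\Sigma_-,N_+,N_-,\Omega)$ consider the system (with $' = d/d\tau$) $\Sigma_+' = -(2-q)\Sigma_+ - 2N_-^2$, $\Sigma_-' = -(2-q)\Sigma_- - 2\sqrt{3}N_+N_-$, $N_+' = (q+2\Sigma_+)N_+ + 2\sqrt{3}\Sigma_- N_-$, $N_-' = (q+2\Sigma_+)N_- + 2\sqrt{3}\Sigma_- N_+$, $\Omega' = 2(q-q^* )\Omega$, where $q := 2(\Sigma_+^2+\Sigma_-^2) + q^*\Omega$. The phase space $B_1^+(\mathrm{VI}_0)$ is the set of points satisfying $\Omega + \Sigma_+^2 + \Sigma_-^2 + N_-^2 = 1$, $\Omega \ge 0$ and $N_- > |N_+|$; it is invariant, solutions exist for all $\tau$, and $\varphi^\tau(x)$ denotes the flow; $(N_\pm)(\tau)$ means $N_\pm(\varphi^\tau(x))$. The $\alpha$-limit set $\alpha(x)$ is the set of all limits of $\varphi^{\tau_k}(x)$ with $\tau_k \to -\infty$. $S_1^+(\mathrm{VI}_0) := B_1^+(\mathrm{VI}_0)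 \cap \{\Sigma_- = 0, N_+ = 0\}$. Writing $\overline{B_1^+(\mathrm{VI}_0)}$ for the closure in $\mathbb{R}^5$: $B(\mathrm{I}) := \overline{B_1^+(\mathrm{VI}_0)} \cap \{N_+ = N_- = 0\}$, $B_2^+(\mathrm{II}) := \overline{B_1^+(\mathrm{VI}_0)} \cap \{N_- = N_+ \neq 0\}$, $B_3^-(\mathrm{II}) := \overline{B_1^+(\mathrm{VI}_0)} \cap \{N_- = -N_+ \neq 0\}$. *)

(* Defs.v *)
From HB Require Import structures.
From mathcomp Require Import all_boot all_order all_algebra.
From mathcomp Require Import all_classical all_reals all_analysis.
Unset Printing Implicit Defensive.
Import Order.TTheory GRing.Theory Num.Theory.
Import numFieldNormedType.Exports.
Local Open Scope classical_set_scope.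
Local Open Scope ring_scope.

(* Points of R^5 with coordinates (Sigma_+, Sigma_-, N_+, N_-, Omega),
   encoded as nested pairs ((((Sp, Sm), Np), Nm), Om) with the product topology. *)
Definition pt5 (R : realType) := (R * R * R * R * R)%type.

Definition SpOf {R : realType} (p : pt5 R) : R := p.1.1.1.1.
Definition SmOf {R : realType} (p : pt5 R) : R := p.1.1.1.2.
Definition NpOf {R : realType} (p : pt5 R) : R := p.1.1.2.
Definition NmOf {R : realType} (p : pt5 R) : R := p.1.2.
Definition OmOf {R : realType} (p : pt5 R) : R := p.2.

Definition qstar {R : realType} (gamma : R) : R := (3 * gamma - 2) / 2.

Definition qfun {R : realType} (gamma Sp Sm Om : R) : R :=
  2 * (Sp ^+ 2 + Sm ^+ 2) + qstar gamma * Om.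

Definition B1plus (R : realType) : set (pt5 R) :=
  [set p | OmOf p + SpOf p ^+ 2 + SmOf p ^+ 2 + NmOf p ^+ 2 = 1
           /\ 0 <= OmOf p /\ `|NpOf p| < NmOf p].

Definition S1plus (R : realType) : set (pt5 R) :=
  B1plus R `&` [set p | SmOf p = 0 /\ NpOf p = 0].

Definition BI (R : realType) : set (pt5 R) :=
  closure (B1plus R) `&` [set p | NpOf p = 0 /\ NmOf p = 0].
Definition B2plusII (R : realType) : set (pt5 R) :=
  closure (B1plus R) `&` [set p | NmOf p = NpOf p /\ NpOf p != 0].
Definition B3minusII (R : realType) : set (pt5 R) :=
  closure (B1plus R) `&` [set p | NmOf p = - NpOf p /\ NpOf p != 0].

Definition is_solution {R : realType} (gamma : R) (X : R -> pt5 R) : Prop :=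
  forall t : R,
    let Sp := SpOf (X t) in let Sm := SmOf (X t) in
    let Np := NpOf (X t) in let Nm := NmOf (X t) in
    let Om := OmOf (X t) in let q := qfun gamma Sp Sm Om in
    [/\ is_derive t 1 (fun s => SpOf (X s)) (- (2 - q) * Sp - 2 * Nm ^+ 2),
        is_derive t 1 (fun s => SmOf (X s))
                      (- (2 - q) * Sm - 2 * Num.sqrt 3 * Np * Nm),
        is_derive t 1 (fun s => NpOf (X s))
                      ((q + 2 * Sp) * Np + 2 * Num.sqrt 3 * Sm * Nm),
        is_derive t 1 (fun s => NmOf (X s))
                      ((q + 2 * Sp) * Nm + 2 * Num.sqrt 3 * Sm * Np) &
        is_derive t 1 (fun s => OmOf (X s)) (2 * (q - qstar gamma) * Om)].

Definition alpha_limit {R : realType} (X : R -> pt5 R) : set (pt5 R) :=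
  [set p | exists tk : nat -> R, tk @ \oo --> -oo /\ (X \o tk) @ \oo --> p].

(* Main.v *)
Require Import Defs.
From HB Require Import structures.
From mathcomp Require Import all_boot all_order all_algebra.
From mathcomp Require Import all_classical all_reals all_analysis.
From mathcomp Require Import ring lra.
Import Order.TTheory GRing.Theory Num.Theory.
Import numFieldNormedType.Exports.
Local Open Scope classical_set_scope.
Local Open Scope ring_scope.

Section D.
Context {R : realType}.
Implicit Types (f g : R -> R).

Lemma dM {f g df dg} {x : R} : is_derive x 1 f df -> is_derive x 1 g dg ->
  is_derive x 1 (fun y => f y * g y) (f x * dg + g x * df).
Proof. move=> Hf Hg; exact: (is_deriveM Hf Hg). Qed.

Lemma dD {f g df dg} {x : R} : is_derive x 1 f df -> is_derive x 1 g dg ->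
  is_derive x 1 (fun y => f y + g y) (df + dg).
Proof. move=> Hf Hg; exact: (is_deriveD Hf Hg). Qed.

Lemma dB {f g df dg} {x : R} : is_derive x 1 f df -> is_derive x 1 g dg ->
  is_derive x 1 (fun y => f y - g y) (df - dg).
Proof. move=> Hf Hg; exact: (is_deriveB Hf Hg). Qed.

Lemma dC (k : R) (x : R) : is_derive x 1 (fun _ : R => k) 0.
Proof. exact: is_derive_cst. Qed.

Lemma dX2 {f df} {x : R} : is_derive x 1 f df ->
  is_derive x 1 (fun y => f y ^+ 2) (2 * f x * df).
Proof.
move=> Hf.
have -> : (fun y => f y ^+ 2) = (fun y => f y * f y).
  by apply/funext => y; rewrite expr2.
have H := dM Hf Hf.
by apply: is_derive_eq; ring.
Qed.

Lemma dexpk (k x : R) : is_derive x 1 (fun y => expR (k * y)) (expR (k * x) * k).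
Proof.
have Hl : is_derive x 1 (fun y : R => k * y) k.
  have H := (dM (dC k x) (is_derive_id x (1:R))).
  by apply: is_derive_eq; rewrite /=; ring.
exact: (is_derive1_comp (is_derive_expR (k * x)) Hl).
Qed.
Lemma deriv_cont (f df : R -> R) : (forall t : R, is_derive t 1 f (df t)) -> continuous f.
Proof.
move=> H t; apply/differentiable_continuous; rewrite -derivable1_diffP.
by case: (H t).
Qed.

Lemma mvt_le (f df : R -> R) (a b K : R) : a <= b ->
  (forall x : R, is_derive x 1 f (df x)) -> (forall x, a <= x <= b -> df x <= K) ->
  f b - f a <= K * (b - a).
Proof.
move=> ab Hd HK.
have [c cab ->] := MVT_segment ab (fun x _ => Hd x)
  (continuous_subspaceT (deriv_cont f df Hd)).
rewrite ler_wpM2r ?subr_ge0 //; apply: HK.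
by move: cab; rewrite in_itv /=.
Qed.

Lemma mvt_ge (f df : R -> R) (a b K : R) : a <= b ->
  (forall x : R, is_derive x 1 f (df x)) -> (forall x, a <= x <= b -> K <= df x) ->
  K * (b - a) <= f b - f a.
Proof.
move=> ab Hd HK.
have [c cab ->] := MVT_segment ab (fun x _ => Hd x)
  (continuous_subspaceT (deriv_cont f df Hd)).
rewrite ler_wpM2r ?subr_ge0 //; apply: HK.
by move: cab; rewrite in_itv /=.
Qed.



Lemma cont_bnd {c : R -> R} {a b} : continuous c -> a <= b ->
  exists K : R, forall x, a <= x <= b -> `|c x| <= K.
Proof.
move=> cc mm.
have cn : {within `[a, b], continuous (fun x => `|c x|)}.
  apply: continuous_subspaceT => x.
  exact: (continuous_comp (cc x) (@norm_continuous _ R^o _)).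
have [m _ Hm] := EVT_max mm cn.
by exists `|c m| => x xi; apply: Hm; rewrite in_itv /=.
Qed.

Lemma lin_zero (f c : R -> R) : continuous c ->
  (forall t : R, is_derive t 1 f (c t * f t)) ->
  forall t0, f t0 = 0 -> forall t, f t = 0.
Proof.
move=> cc Hd t0 f0 t.
have fsq0 : forall y k, f y ^+ 2 * expR k <= 0 -> f y = 0.
  move=> y k; rewrite pmulr_lle0 ?expR_gt0 // => h.
  by apply/eqP; rewrite -sqrf_eq0 eq_le h sqr_ge0.
case: (leP t0 t) => tt0.
- have [K HK] := cont_bnd (c:=c) cc tt0.
  pose g := fun y => f y ^+ 2 * expR ((- (2 * K)) * y).
  have Hg : forall y : R, is_derive y 1 g (2 * f y ^+ 2 * expR (- (2 * K) * y) * (c y - K)).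
    move=> y; have H := dM (dX2 (Hd y)) (dexpk (- (2 * K)) y).
    by apply: is_derive_eq; rewrite /=; ring.
  have := @mvt_le g _ t0 t 0 tt0 Hg.
  have -> : g t0 = 0 by rewrite /g f0; ring.
  rewrite mul0r subr0 => H; apply: (fsq0 t (- (2 * K) * t)); apply: H => x xi.
  apply: mulr_ge0_le0; first by apply: mulr_ge0; [apply: mulr_ge0; [|exact: sqr_ge0]|exact: expR_ge0].
  by rewrite subr_le0; apply: le_trans (HK x xi); exact: ler_norm.
- have [K HK] := cont_bnd (c:=c) cc (ltW tt0).
  pose g := fun y => f y ^+ 2 * expR ((2 * K) * y).
  have Hg : forall y : R, is_derive y 1 g (2 * f y ^+ 2 * expR (2 * K * y) * (c y + K)).
    move=> y; have H := dM (dX2 (Hd y)) (dexpk (2 * K) y).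
    by apply: is_derive_eq; rewrite /=; ring.
  have := @mvt_ge g _ t t0 0 (ltW tt0) Hg.
  have -> : g t0 = 0 by rewrite /g f0; ring.
  rewrite mul0r sub0r oppr_ge0 => H; apply: (fsq0 t (2 * K * t)); apply: H => x xi.
  apply: mulr_ge0; first by apply: mulr_ge0; [apply: mulr_ge0; [|exact: sqr_ge0]|exact: expR_ge0].
  rewrite -lerBlDr sub0r lerNl; apply: le_trans (HK x xi).
  by rewrite -normrN ler_norm.
Qed.

Lemma lin_pos (f c : R -> R) : continuous c ->
  (forall t : R, is_derive t 1 f (c t * f t)) ->
  forall t0, 0 < f t0 -> forall t, 0 < f t.
Proof.
move=> cc Hd t0 p t; rewrite ltNge; apply/negP => ft.
have fc := deriv_cont f _ Hd.
suff [s _ fs] : exists2 s : R, True & f s = 0.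
  by move: p; rewrite (lin_zero f c cc Hd s fs t0) ltxx.
case: (leP t0 t) => tt0.
- have h0 : Num.min (f t0) (f t) <= 0 <= Num.max (f t0) (f t).
    by rewrite ge_min le_max ft (ltW p) orbT.
  have [s _ fs] := IVT tt0 (continuous_subspaceT fc) h0.
  by exists s.
- have h0 : Num.min (f t) (f t0) <= 0 <= Num.max (f t) (f t0).
    by rewrite ge_min le_max ft (ltW p) orbT.
  have [s _ fs] := IVT (ltW tt0) (continuous_subspaceT fc) h0.
  by exists s.
Qed.

Lemma lin_nonneg (f c : R -> R) : continuous c ->
  (forall t : R, is_derive t 1 f (c t * f t)) ->
  forall t0, 0 <= f t0 -> forall t, 0 <= f t.
Proof.
move=> cc Hd t0; rewrite le_eqVlt => /orP[/eqP h|h] t.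
  by rewrite (lin_zero f c cc Hd t0 (esym h)).
exact/ltW/(lin_pos f c cc Hd t0 h).
Qed.
End D.
Lemma key_ineq (R : realFieldType) (u v m n w qs s : R) :
  w + u^+2 + v^+2 + n^+2 = 1 -> 0 <= w -> 0 <= qs -> qs <= 2 -> s^+2 = 3 -> 0 <= s ->
  m^+2 <= n^+2 ->
  -4*(1+u)*v^+2 + 1/16*(-(2-(2*(u^+2+v^+2) + qs*w))*n*v* m
     + 2*s*(v^+2* m^+2+v^+2*n^+2-m^+2*n^+2))
  <= -(1/16)*(n^+2-m^+2)*(v^+2+m^+2+1/16*n*v* m).
Proof.
move=> hc hw hq0 hq2 hs3 hs0 hmn.
set a := 1 + u.
set D := 2 - (2*(u^+2+v^+2) + qs*w).
have hv2 : 0 <= v^+2 by exact: sqr_ge0.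
have hm2 : 0 <= m^+2 by exact: sqr_ge0.
have hn2 : 0 <= n^+2 by exact: sqr_ge0.
have hu2 : 0 <= u^+2 by exact: sqr_ge0.
have ha : n^+2 <= 2 * a.
  have : 0 <= (1+u)^+2 by exact: sqr_ge0.
  rewrite /a; nra.
have hD0 : 0 <= D by rewrite /D; nra.
have hD4 : D <= 4 * a.
  have : 0 <= (1+u)^+2 by exact: sqr_ge0.
  rewrite /D /a; nra.
have hD2 : D <= 2 by rewrite /D; nra.
have hs1 : 17/10 <= s by nra.
have hs2 : s <= 9/5 by nra.
have hn1 : n^+2 <= 1 by nra.
set A := a * v^+2.
set B := n^+2 * m^+2.
have hA : 0 <= A by rewrite /A; nra.
have hB : 0 <= B by rewrite /B; nra.
have amgm : - (n*v* m) <= v^+2/4 + B.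
  have : 0 <= (v/2 + n* m)^+2 by exact: sqr_ge0.
  rewrite /B; nra.
have hDnvm : - (D*n*v* m) <= A + 2 * B.
  have h1 : D * (- (n*v* m)) <= D * (v^+2/4 + B) by apply: ler_wpM2l.
  have h2 : D * (v^+2/4) <= A by rewrite /A; nra.
  have h3 : D * B <= 2 * B by nra.
  nra.
have hCc : v^+2* m^+2+v^+2*n^+2 <= 4 * A.
  rewrite /A; nra.
have hnvm : n*v* m <= (v^+2+m^+2)/2.
  have : 0 <= (v - m)^+2 by exact: sqr_ge0.
  have : 0 <= (v + m)^+2 by exact: sqr_ge0.
  have : (n*v* m)^+2 <= (v* m)^+2.
    rewrite exprMn; have : 0 <= (v* m)^+2 by exact: sqr_ge0. nra.
  nra.
have hDl : 0 <= n^+2 - m^+2 by lra.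
have hP : v^+2+m^+2+1/16*n*v* m <= 33/32 * (v^+2+m^+2) by nra.
have hP0 : 0 <= v^+2+m^+2+1/16*n*v* m.
  have : 0 <= (v + m)^+2 by exact: sqr_ge0.
  have : 0 <= (v - m)^+2 by exact: sqr_ge0.
  have : (n*v* m)^+2 <= (v* m)^+2.
    rewrite exprMn; have : 0 <= (v* m)^+2 by exact: sqr_ge0. nra.
  nra.
have hDP : (n^+2-m^+2)*(v^+2+m^+2+1/16*n*v* m) <= 33/32 * (2*A + B).
  have e1 : (n^+2-m^+2)*(v^+2+m^+2+1/16*n*v* m) <= (n^+2-m^+2) * (33/32 * (v^+2+m^+2)).
    by apply: ler_wpM2l.
  have e2 : (n^+2-m^+2) * (v^+2+m^+2) <= 2*A + B by rewrite /A /B; nra.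
  nra.
have hsA : s * (v^+2* m^+2+v^+2*n^+2) <= 9/5 * (4 * A) by nra.
have hsB : 17/10 * B <= s * B by nra.
have -> : -4*a*v^+2 + 1/16*(-D*n*v* m + 2*s*(v^+2* m^+2+v^+2*n^+2- m^+2*n^+2))
  = -4*A + 1/16*(-(D*n*v* m) + 2*(s*(v^+2* m^+2+v^+2*n^+2)) - 2*(s*B)).
  by rewrite /A /B; ring.
set Z := (n^+2- m^+2)*(v^+2+ m^+2+1/16*n*v* m) in hDP *.
set Y := s*(v^+2* m^+2+v^+2*n^+2) in hsA *.
set W := s * B in hsB *.
set T := D*n*v* m in hDnvm *.
have -> : - (1 / 16) * (n ^+ 2 - m ^+ 2) * (v ^+ 2 + m ^+ 2 + 1 / 16 * n * v * m) = -(1/16) * Z.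
  by rewrite /Z; ring.
lra.
Qed.
Section Dv.
Context {R : realType}.
Definition Dv (f : R -> R) := forall t : R, exists df, is_derive t 1 f df.
Lemma DvD f g : Dv f -> Dv g -> Dv (fun t => f t + g t).
Proof. move=> hf hg t; have [a ha] := hf t; have [b hb] := hg t; exists (a + b); exact: dD. Qed.
Lemma DvM f g : Dv f -> Dv g -> Dv (fun t => f t * g t).
Proof. move=> hf hg t; have [a ha] := hf t; have [b hb] := hg t; eexists; exact: dM. Qed.
Lemma DvC k : Dv (fun _ => k).
Proof. move=> t; exists 0; exact: dC. Qed.
Lemma Dv_cont f : Dv f -> continuous f.
Proof.
move=> hf t; apply/differentiable_continuous; rewrite -derivable1_diffP.
by have [a []] := hf t.
Qed.
Lemma Dv_of f df : (forall t : R, is_derive t 1 f (df t)) -> Dv f.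
Proof. by move=> h t; exists (df t). Qed.
End Dv.

Definition fu {R : realType} (X : R -> pt5 R) t := SpOf (X t).
Definition fv {R : realType} (X : R -> pt5 R) t := SmOf (X t).
Definition fm {R : realType} (X : R -> pt5 R) t := NpOf (X t).
Definition fn {R : realType} (X : R -> pt5 R) t := NmOf (X t).
Definition fw {R : realType} (X : R -> pt5 R) t := OmOf (X t).
Definition fq {R : realType} (gamma : R) (X : R -> pt5 R) t :=
  2 * (fu X t ^+ 2 + fv X t ^+ 2) + qstar gamma * fw X t.

Lemma qs_bnd {R : realType} {g : R} : 2/3 < g -> g < 2 -> 0 < qstar g /\ qstar g < 2.
Proof.
move=> h1 h2; rewrite /qstar; split.
  by rewrite divr_gt0 //; lra.
by rewrite ltr_pdivrMr //; lra.
Qed.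

Section Main.
Context {R : realType} (gamma : R) (X : R -> pt5 R).
Hypothesis hg1 : 2/3 < gamma.
Hypothesis hg2 : gamma < 2.
Hypothesis Hsol : is_solution gamma X.
Hypothesis Hx0 : X 0 \in B1plus R `\` S1plus R.


Local Notation u := (fu X).
Local Notation v := (fv X).
Local Notation m := (fm X).
Local Notation n := (fn X).
Local Notation w := (fw X).
Local Notation qs := (qstar gamma).
Local Notation s3 := (Num.sqrt (3:R)).
Local Notation q := (fq gamma X).

Lemma qs0 : 0 < qs.
Proof. by case: (qs_bnd hg1 hg2). Qed.
Lemma qs2 : qs < 2.
Proof. by case: (qs_bnd hg1 hg2). Qed.

Lemma init : [/\ w 0 + u 0 ^+ 2 + v 0 ^+ 2 + n 0 ^+ 2 = 1, 0 <= w 0,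
  `|m 0| < n 0 & ~ (v 0 = 0 /\ m 0 = 0)].
Proof.
move: Hx0; rewrite inE => -[[h1 [h2 h3]] hS]; split => // -[h4 h5].
by apply: hS; split => //; split.
Qed.

Lemma Du (t : R) : is_derive t 1 u (-(2 - q t) * u t - 2 * n t ^+ 2).
Proof. by case: (Hsol t). Qed.
Lemma Dvv (t : R) : is_derive t 1 v (-(2 - q t) * v t - 2 * s3 * m t * n t).
Proof. by case: (Hsol t). Qed.
Lemma Dm (t : R) : is_derive t 1 m ((q t + 2 * u t) * m t + 2 * s3 * v t * n t).
Proof. by case: (Hsol t). Qed.
Lemma Dn (t : R) : is_derive t 1 n ((q t + 2 * u t) * n t + 2 * s3 * v t * m t).
Proof. by case: (Hsol t). Qed.
Lemma Dw (t : R) : is_derive t 1 w (2 * (q t - qs) * w t).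
Proof. by case: (Hsol t). Qed.

Lemma Dvu : Dv u. Proof. exact: Dv_of Du. Qed.
Lemma Dvvv : Dv v. Proof. exact: Dv_of Dvv. Qed.
Lemma Dvm : Dv m. Proof. exact: Dv_of Dm. Qed.
Lemma Dvn : Dv n. Proof. exact: Dv_of Dn. Qed.
Lemma Dvw : Dv w. Proof. exact: Dv_of Dw. Qed.

Lemma Dvq : Dv q.
Proof.
apply: DvD; first apply: DvM; first exact: DvC.
  by apply: DvD; apply: DvM; exact: Dvu || exact: Dvvv.
by apply: DvM; [exact: DvC | exact: Dvw].
Qed.

Lemma constraint t : w t + u t ^+ 2 + v t ^+ 2 + n t ^+ 2 = 1.
Proof.
pose G := fun t => w t + u t ^+ 2 + v t ^+ 2 + n t ^+ 2 - 1.
have HG : forall t : R, is_derive t 1 G ((2 * q t) * G t).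
  move=> y.
  have H := dB (dD (dD (dD (Dw y) (dX2 (Du y))) (dX2 (Dvv y))) (dX2 (Dn y))) (dC 1 y).
  by apply: is_derive_eq; rewrite /G /q; ring.
have cG : continuous (fun t => 2 * q t).
  by apply: Dv_cont; apply: DvM; [exact: DvC | exact: Dvq].
have G0 : G 0 = 0.
  by case: init => h _ _ _; rewrite /G h subrr.
have := lin_zero G _ cG HG 0 G0 t.
by rewrite /G => /eqP; rewrite subr_eq0 => /eqP.
Qed.


Lemma w_ge0 t : 0 <= w t.
Proof.
have cc : continuous (fun t => 2 * (q t - qs)).
  apply: Dv_cont; apply: DvM; first exact: DvC.
  by apply: DvD; [exact: Dvq | exact: DvC].
by case: init => _ h _ _; exact: (lin_nonneg w _ cc Dw 0 h t).
Qed.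

Lemma npm_pos t : 0 < n t + m t.
Proof.
pose f := fun t => n t + m t.
have Hf : forall t : R, is_derive t 1 f ((q t + 2 * u t + 2 * s3 * v t) * f t).
  move=> y; have H := dD (Dn y) (Dm y).
  by apply: is_derive_eq; rewrite /f; ring.
have cc : continuous (fun t => q t + 2 * u t + 2 * s3 * v t).
  apply: Dv_cont; apply: DvD; first apply: DvD; first exact: Dvq.
  - by apply: DvM; [exact: DvC | exact: Dvu].
  - by apply: DvM; [exact: DvC | exact: Dvvv].
have h0 : 0 < f 0.
  case: init => _ _ h _; rewrite /f.
  by move: h; rewrite ltr_norml => /andP[h1 h2]; lra.
exact: (lin_pos f _ cc Hf 0 h0 t).
Qed.

Lemma nmm_pos t : 0 < n t - m t.
Proof.
pose f := fun t => n t - m t.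
have Hf : forall t : R, is_derive t 1 f ((q t + 2 * u t - 2 * s3 * v t) * f t).
  move=> y; have H := dB (Dn y) (Dm y).
  by apply: is_derive_eq; rewrite /f; ring.
have cc : continuous (fun t => q t + 2 * u t - 2 * s3 * v t).
  apply: Dv_cont; apply: DvD; first apply: DvD; first exact: Dvq.
  - by apply: DvM; [exact: DvC | exact: Dvu].
  - have -> : (fun t => - (2 * s3 * v t)) = (fun t => (- (2 * s3)) * v t).
      by apply/funext => y; ring.
    by apply: DvM; [exact: DvC | exact: Dvvv].
have h0 : 0 < f 0.
  case: init => _ _ h _; rewrite /f.
  by move: h; rewrite ltr_norml => /andP[h1 h2]; lra.
exact: (lin_pos f _ cc Hf 0 h0 t).
Qed.


Local Notation Dl := (fun t => n t ^+ 2 - m t ^+ 2).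

Lemma DDl (t : R) : is_derive t 1 Dl (2 * (q t + 2 * u t) * Dl t).
Proof.
have H := dB (dX2 (Dn t)) (dX2 (Dm t)).
by apply: is_derive_eq; ring.
Qed.

Lemma Dl_pos t : 0 < Dl t.
Proof.
have -> : n t ^+ 2 - m t ^+ 2 = (n t + m t) * (n t - m t) by ring.
by rewrite mulr_gt0 ?npm_pos ?nmm_pos.
Qed.

Lemma s3_sq : s3 ^+ 2 = 3.
Proof. by rewrite sqr_sqrtr. Qed.
Lemma s3_ge0 : 0 <= s3.
Proof. exact: sqrtr_ge0. Qed.

Lemma bnds t : [/\ u t ^+ 2 <= 1, v t ^+ 2 <= 1, n t ^+ 2 <= 1,
  m t ^+ 2 <= n t ^+ 2 & 0 <= q t <= 2].
Proof.
have c := constraint t; have hw := w_ge0 t; have hd := Dl_pos t.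
have := qs0; have := qs2 => q2 q0.
have hu := sqr_ge0 (u t); have hv := sqr_ge0 (v t); have hn := sqr_ge0 (n t).
split; try lra; rewrite /fq; apply/andP; split; nra.
Qed.

Local Notation P := (fun t => v t ^+ 2 + m t ^+ 2 + 1/16 * n t * v t * m t).
Local Notation Lx := (fun t => -4*(1 + u t)*v t ^+2 + 1/16*(-(2 - q t)* n t * v t * m t
     + 2*s3*(v t ^+2* m t ^+2+v t ^+2*n t ^+2- m t ^+2*n t ^+2))).

Lemma P_bnd t : 0 <= P t /\ P t <= 33/32 * (v t ^+ 2 + m t ^+ 2).
Proof.
have [_ h2 h3 h4 _] := bnds t.
set a := v t; set b := m t; set c := n t.
have : 0 <= (a + b)^+2 by exact: sqr_ge0.
have : 0 <= (a - b)^+2 by exact: sqr_ge0.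
have : (c*a*b)^+2 <= (a*b)^+2.
  rewrite exprMn; have : 0 <= (a*b)^+2 by exact: sqr_ge0. nra.
move=> *; split; nra.
Qed.

Lemma P_le2 t : P t <= 2.
Proof.
have [_ h2 h3 h4 _] := bnds t; have [_ h] := P_bnd t.
have := constraint t; have := w_ge0 t; have := sqr_ge0 (u t); lra.
Qed.

Local Notation V := (fun t => P t * (Dl t)^-1).

Lemma DV (t : R) : is_derive t 1 V (Lx t / Dl t).
Proof.
have hD : Dl t != 0 by rewrite gt_eqF ?Dl_pos.
have H1 := dD (dD (dX2 (Dvv t)) (dX2 (Dm t)))
  (dM (dM (dM (dC (1/16) t) (Dn t)) (Dvv t)) (Dm t)).
have H2 := is_deriveV (f := Dl) hD (DDl t).
have H := dM H1 H2.
apply: is_derive_eq; rewrite /=.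
have e : forall a b : R, a *: b = a * b by [].
rewrite e; set D := n t ^+ 2 - m t ^+ 2 in hD *.
by field.
Qed.


Lemma dV_le t : Lx t / Dl t <= -(1/16) * P t.
Proof.
have [_ _ _ hmn _] := bnds t.
have K := key_ineq _ (u t) (v t) (m t) (n t) (w t) qs s3 (constraint t) (w_ge0 t)
  (ltW qs0) (ltW qs2) s3_sq s3_ge0 hmn.
rewrite ler_pdivrMr ?Dl_pos //.
by apply: (le_trans K); rewrite /= mulrAC.
Qed.

Lemma V_noninc a b : a <= b -> V b <= V a.
Proof.
move=> ab.
have := @mvt_le R V (fun t => Lx t / Dl t) a b 0 ab DV.
rewrite mul0r subr_le0; apply => x _.
apply: (le_trans (dV_le x)).
have [h _] := P_bnd x.
by rewrite mulNr oppr_le0 mulr_ge0.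
Qed.

Lemma P_lb t : 31/32 * (v t ^+ 2 + m t ^+ 2) <= P t.
Proof.
have [_ h2 h3 h4 _] := bnds t.
set a := v t; set b := m t; set c := n t.
have : 0 <= (a + b)^+2 by exact: sqr_ge0.
have : 0 <= (a - b)^+2 by exact: sqr_ge0.
have : (c*a*b)^+2 <= (a*b)^+2.
  rewrite exprMn; have : 0 <= (a*b)^+2 by exact: sqr_ge0. nra.
move=> *; nra.
Qed.

Lemma V_ge0 t : 0 <= V t.
Proof.
have [h _] := P_bnd t.
by rewrite mulr_ge0 // invr_ge0 ltW ?Dl_pos.
Qed.

Lemma V0_pos : 0 < V 0.
Proof.
rewrite mulr_gt0 ?invr_gt0 ?Dl_pos //.
apply: (lt_le_trans _ (P_lb 0)).
case: init => _ _ _ hS.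
have hv := sqr_ge0 (v 0); have hm := sqr_ge0 (m 0).
have : 0 < v 0 ^+ 2 + m 0 ^+ 2.
  rewrite lt_neqAle addr_ge0 // andbT eq_sym.
  apply/negP => /eqP h; apply: hS.
  have hv0 : v 0 ^+ 2 = 0 by lra.
  have hm0 : m 0 ^+ 2 = 0 by lra.
  by split; apply/eqP; rewrite -sqrf_eq0; apply/eqP.
lra.
Qed.

Lemma DlV t : Dl t * V t = P t.
Proof.
have hD : Dl t != 0 by rewrite gt_eqF ?Dl_pos.
rewrite /=; set D := n t ^+ 2 - m t ^+ 2 in hD *.
by field.
Qed.


Lemma bernoulli (b : R) (k : nat) : 0 <= b -> 1 + k%:R * b <= (1 + b) ^+ k.
Proof.
move=> b0; elim: k => [|k IH]; first by rewrite mul0r addr0 expr0.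
rewrite exprS -natr1.
have h1 : 0 <= (1 + b) by lra.
have := ler_wpM2l h1 IH.
have : 0 <= k%:R * b * b by rewrite mulr_ge0 // mulr_ge0.
move=> h2 h3; apply: le_trans h3; nra.
Qed.

Lemma Dl_le8 t : 2 * (q t + 2 * u t) * Dl t <= 8.
Proof.
have [hu _ _ hmn /andP[q0 q2]] := bnds t.
have hD := Dl_pos t.
have hD1 : Dl t <= 1 by have := sqr_ge0 (m t); have := bnds t; case=> _ _ h3 _ _; lra.
have hu1 : u t <= 1 by nra.
nra.
Qed.

Lemma Dl_small e : 0 < e -> exists T, forall t, t <= T -> Dl t < e.
Proof.
move=> e0; apply: contrapT => H.
have bad : forall T, exists t, t <= T /\ e <= Dl t.
  move=> T; apply: contrapT => H2; apply: H; exists T => t tT.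
  by rewrite ltNge; apply/negP => h; apply: H2; exists t; split.
pose dt := e / 16.
have hpos : 0 < dt by rewrite /dt divr_gt0.
pose beta := e * dt / 32.
have bpos : 0 < beta by rewrite /beta !divr_gt0 // mulr_gt0.
have step : forall t, e <= Dl t -> (1 + beta) * V t <= V (t - dt).
  move=> t1 He.
  have Dlb : forall s, t1 - dt <= s <= t1 -> e/2 <= Dl s.
    move=> s /andP[s1 s2].
    have := @mvt_le R Dl (fun t => 2 * (q t + 2 * u t) * Dl t) s t1 8 s2 DDl.
    have H8 : forall x, s <= x <= t1 -> 2 * (q x + 2 * u x) * Dl x <= 8.
      by move=> x _; exact: Dl_le8.
    move=> /(_ H8) hh; rewrite /dt in s1; lra.
  have th : t1 - dt <= t1 by lra.
  have := @mvt_le R V (fun t => Lx t / Dl t) (t1 - dt) t1 (-(e/32) * V t1) th DV.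
  have HK : forall x, t1 - dt <= x <= t1 -> Lx x / Dl x <= -(e/32) * V t1.
    move=> x /andP[x1 x2].
    apply: (le_trans (dV_le x)); rewrite -DlV.
    have h1 := Dlb x (introT andP (conj x1 x2)).
    have h2 : V t1 <= V x by exact: V_noninc.
    have h3 := V_ge0 t1.
    have : e / 2 * V t1 <= Dl x * V x.
      apply: ler_pM => //; lra.
    set A := Dl x * V x; set B := V t1; lra.
  move=> /(_ HK); rewrite /beta; set A := V (t1 - dt); set B := V t1.
  have -> : t1 - (t1 - dt) = dt by ring.
  have -> : (1 + e * dt / 32) * B = B + e / 32 * B * dt by field.
  lra.
have ind : forall k : nat, exists t, [/\ t <= 0, e <= Dl t & (1 + beta) ^+ k * V 0 <= V t].
  elim => [|k [x [x0 ex Vx]]].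
    have [y [y0 ey]] := bad 0; exists y; split => //.
    by rewrite expr0 mul1r; exact: V_noninc.
  have [y [yx ey]] := bad (x - dt); exists y; split => //.
    lra.
  rewrite exprS -mulrA.
  have h1 := V_noninc _ _ yx; have h2 := step x ex.
  have h3 : (1 + beta) * ((1 + beta) ^+ k * V 0) <= (1 + beta) * V x.
    by apply: ler_wpM2l => //; lra.
  exact: le_trans h3 (le_trans h2 h1).
have bnd : forall t, e <= Dl t -> V t <= 2 / e.
  move=> t et; rewrite ler_pdivlMr //.
  have h1 : V t * e <= V t * Dl t by apply: ler_wpM2l; [exact: V_ge0 | exact: et].
  by apply: le_trans h1 _; rewrite mulrC DlV; exact: P_le2.
pose M := 2 / e / (beta * V 0).
have V0 := V0_pos.
have [t [_ et Vt]] := ind (Num.truncn M).+1.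
have := bnd t et.
have hb := bernoulli beta (Num.truncn M).+1 (ltW bpos).
have hk := truncnS_gt M.
set k := ((Num.truncn M).+1)%:R in hb hk.
set K := (Num.truncn M).+1 in hb Vt.
have hM : M * (beta * V 0) = 2 / e.
  rewrite /M; have hA : beta * V 0 != 0 by rewrite gt_eqF // mulr_gt0.
  by rewrite divfK.
have h1 : (1 + k * beta) * V 0 <= (1 + beta) ^+ K * V 0.
  by apply: ler_wpM2r => //; exact: ltW V0.
have h2 : M * (beta * V 0) < k * (beta * V 0) by rewrite ltr_pM2r // mulr_gt0.
have h3 : (1 + k * beta) * V 0 = V 0 + k * (beta * V 0) by ring.
have := bnd t et.
set A := V 0 in V0 h1 h2 h3 hM; set B := V t in Vt *.
set C := (1 + beta) ^+ K * A in h1 Vt.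
set D := k * (beta * A) in h2 h3.
move=> hB; lra.
Qed.


Lemma B1_all t : B1plus R (X t).
Proof.
split; first exact: (constraint t).
split; first exact: (w_ge0 t).
have h1 := npm_pos t; have h2 := nmm_pos t.
rewrite ltr_norml; apply/andP; split; rewrite /fn /fm in h1 h2; lra.
Qed.

End Main.

Lemma cNm {R : realType} (p : pt5 R) : (fun x : pt5 R => NmOf x) @ p --> NmOf p.
Proof.
apply: (@cvg_comp _ _ _ fst snd (nbhs p) (nbhs p.1)).
  exact: cvg_fst.
exact: cvg_snd.
Qed.

Lemma cNp {R : realType} (p : pt5 R) : (fun x : pt5 R => NpOf x) @ p --> NpOf p.
Proof.
apply: (@cvg_comp _ _ _ (fun x : pt5 R => x.1.1) snd (nbhs p) (nbhs p.1.1)).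
  apply: (@cvg_comp _ _ _ fst fst (nbhs p) (nbhs p.1)).
    exact: cvg_fst.
  exact: cvg_fst.
exact: cvg_snd.
Qed.

Theorem mainTheorem4 (R : realType) (gamma : R) (X : R -> pt5 R) :
  2 / 3 < gamma -> gamma < 2 ->
  is_solution gamma X ->
  X 0 \in B1plus R `\` S1plus R ->
  (fun t => NmOf (X t) ^+ 2 - NpOf (X t) ^+ 2) @ -oo --> (0 : R) /\
  alpha_limit X `<=` BI R `|` B2plusII R `|` B3minusII R.
Proof.
move=> hg1 hg2 Hsol Hx0.
have L : (fun t => NmOf (X t) ^+ 2 - NpOf (X t) ^+ 2) @ -oo --> (0 : R).
  apply/cvgrPdist_lt => e e0.
  have [T HT] := Dl_small _ _ hg1 hg2 Hsol Hx0 _ e0.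
  exists T; split; first exact: num_real.
  move=> t tT; rewrite sub0r normrN ger0_norm.
    exact: (HT t (ltW tT)).
  exact: (ltW (Dl_pos _ _ Hsol Hx0 t)).
split => // p [tk [htk hX]].
have hcl : closure (B1plus R) p.
  apply: (closed_cvg (closure (B1plus R)) (@closed_closure _ _) _ p hX).
  apply: nearW => k; apply: subset_closure.
  exact: (B1_all _ _ Hsol Hx0 (tk k)).
pose g := fun x : pt5 R => NmOf x ^+ 2 - NpOf x ^+ 2.
have hg : g @ p --> g p.
  have h1 : (fun x : pt5 R => NmOf x * NmOf x) @ p --> NmOf p * NmOf p.
    by apply: cvgM; exact: cNm.
  have h2 : (fun x : pt5 R => NpOf x * NpOf x) @ p --> NpOf p * NpOf p.
    by apply: cvgM; exact: cNp.
  have h3 : (fun x : pt5 R => NmOf x * NmOf x - NpOf x * NpOf x) @ p -->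
    NmOf p * NmOf p - NpOf p * NpOf p.
    by apply: cvgB.
  have -> : g = (fun x : pt5 R => NmOf x * NmOf x - NpOf x * NpOf x).
    by apply/funext => x; rewrite /g !expr2.
  exact: h3.
have c1 := cvg_comp (X \o tk) g hX hg.
have c2 := cvg_comp tk _ htk L.
have e0 : g p = 0 := cvg_unique _ c1 c2.
have e1 : NmOf p ^+ 2 = NpOf p ^+ 2.
  by apply/eqP; rewrite -subr_eq0; apply/eqP; exact: e0.
move: e1; move/eqP; rewrite eqf_sqr; case/orP => /eqP h.
  case: (eqVneq (NpOf p) 0) => hp.
    by left; left; split => //; split => //; rewrite h hp.
  by left; right; split.
case: (eqVneq (NpOf p) 0) => hp.
  by left; left; split => //; split => //; rewrite h hp oppr0.
by right; split.
Qed.
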